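(* Assume the setting below and sharp missingness: $M_i(1)=M_i(0)$ for all $i$. Fix $\boldsymbol\delta\in\mathbb R^n$ and let $\mathcal S=\{i:M_i=1\}$, $n_{\mathcal S1}=\sum_{i\in\mathcal S}Z_i$, $n_{\mathcal S0}=|\mathcal S|-n_{\mathcal S1}$. Define $t_{\mathrm R,\phi,\mathcal S}(\boldsymbol z,\boldsymbol y)=t_{\mathrm R,\phi}(\boldsymbol z_{\mathcal S},\boldsymbol y_{\mathcal S})$ (statistic computed on the subvectors indexed by $\mathcal S$, original order kept) and $G_{\mathrm R,\phi,\mathcal S}(c)=\mathbb P(t_{\mathrm R,\phi,\mathcal S}(\boldsymbol A,\boldsymbol y_0)\ge c)$, where $\boldsymbol A_{\mathcal S}$ is uniform over assignments of the units of $\mathcal S$ with exactly $n_{\mathcal S1}$ treated and $\boldsymbol y_0\in\mathbb R^n$ is any fixed vector. Then $p_{\boldsymbol Z,\boldsymbol\delta,\mathcal S}=G_{\mathrm R,\phi,\mathcal S}\big(t_{\mathrm R,\phi,\mathcal S}(\boldsymbol Z,\boldsymbol Y-\boldsymbol\delta\circ\boldsymbol Z)\big)$ is a valid p-value for $H_{\boldsymbol\delta}:\boldsymbol\tau=\boldsymbol\delta$: if $H_{\boldsymbol\delta}$ holds, $\mathbb P(p_{\boldsymbol Z,\boldsymbol\delta,\mathcal S}\le\alpha)\le\alpha$ for all $\alpha\in(0,1)$.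
   Context: There are $n$ units with fixed potential outcomes $Y_i^\star(0),Y_i^\star(1)\in\mathbb R$ and fixed potential missingness indicators $M_i(0),M_i(1)\in\{0,1\}$; $\tau_i=Y_i^\star(1)-Y_i^\star(0)$. $\boldsymbol Z\in\{0,1\}^n$ is from a completely randomized experiment: uniform over vectors with exactly $n_1$ ones ($n_1,n_0\ge1$ fixed, $n_1+n_0=n$), independent of all potential quantities; probabilities are over $\boldsymbol Z$. $M_i=Z_iM_i(1)+(1-Z_i)M_i(0)$; the realized outcome $Z_iY_i^\star(1)+(1-Z_i)Y_i^\star(0)$ is observed, denoted $Y_i$, iff $M_i=1$; only coordinates in $\mathcal S$ of $\boldsymbol Y-\boldsymbol\delta\circ\boldsymbol Z$ are used. $\circ$ is the entrywise product. $\psi_{i,j}(y,y')=\mathbf 1\{y>y'\}+\mathbf 1\{y=y'\}\mathbf 1\{i\ge j\}$; $\mathrm{rank}_i(\boldsymbol y)=\sum_j\psi_{i,j}(y_i,y_j)$; $\phi$ nondecreasing real function on the nonnegative integers; $t_{\mathrm R,\phi}(\boldsymbol z,\boldsymbol y)$ is either $\sum_i z_i\phi(\mathrm{rank}_i(\boldsymbol y))$ or $\sum_i z_i\phi(\sum_j(1-z_j)\psi_{i,j}(y_i,y_j))$ (sums over units of the given vectors); the result holds for either. *)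

(* Defs.v *)
From HB Require Import structures.
From mathcomp Require Import all_boot all_order all_algebra.
Set Implicit Arguments. Unset Strict Implicit. Unset Printing Implicit Defensive.
Import Order.TTheory GRing.Theory Num.Theory.
Local Open Scope ring_scope.

Definition assign (m k : nat) : {set {ffun 'I_m -> bool}} :=
  [set z : {ffun 'I_m -> bool} | #|[set i | z i]| == k].

Definition unifP (R : realFieldType) (m k : nat) (E : pred {ffun 'I_m -> bool}) : R :=
  (#|[set z in assign m k | E z]|%:R / #|assign m k|%:R).
Arguments unifP R m k E : clear implicits.

Definition psi (R : realFieldType) (m : nat) (i j : 'I_m) (y y' : R) : nat :=
  (((y' < y)%R : nat) + ((y == y') && (j <= i)%N : nat))%N.

Definition rank_ (R : realFieldType) (m : nat) (y : 'I_m -> R) (i : 'I_m) : nat :=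
  (\sum_j psi i j (y i) (y j))%N.

Inductive rank_kind := FullRank | ControlRank.

Definition tR (R : realFieldType) (kind : rank_kind) (phi : nat -> R) (m : nat)
  (z : 'I_m -> bool) (y : 'I_m -> R) : R :=
  \sum_i (z i)%:R *
    phi (match kind with
         | FullRank => rank_ y i
         | ControlRank => (\sum_j (1 - z j) * psi i j (y i) (y j))%N
         end).

(* Subvector indexed by S, in the original (increasing) order of indices. *)
Definition subv (T : Type) (n : nat) (S : {set 'I_n}) (f : 'I_n -> T) : 'I_#|S| -> T :=
  fun k => f (enum_val k).
Arguments subv {T n} S f _.

Definition tS (R : realFieldType) (kind : rank_kind) (phi : nat -> R) (n : nat)
  (S : {set 'I_n}) (z : 'I_n -> bool) (y : 'I_n -> R) : R :=
  tR kind phi (subv S z) (subv S y).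

Definition G (R : realFieldType) (kind : rank_kind) (phi : nat -> R) (n : nat)
  (S : {set 'I_n}) (k : nat) (y0 : 'I_n -> R) (c : R) : R :=
  unifP R #|S| k (fun a : {ffun 'I_#|S| -> bool} => c <= tR kind phi a (subv S y0)).

Definition pval (R : realFieldType) (kind : rank_kind) (phi : nat -> R) (n : nat)
  (Y0 Y1 : 'I_n -> R) (M0 M1 : 'I_n -> bool) (delta y0 : 'I_n -> R)
  (z : 'I_n -> bool) : R :=
  let M := fun i => if z i then M1 i else M0 i in
  let S := [set i | M i] in
  let Y := fun i => if z i then Y1 i else Y0 i in
  let nS1 := #|[set i in S | z i]| in
  G kind phi S nS1 y0 (tS kind phi S z (fun i => Y i - delta i * (z i)%:R)).

(* Main.v *)
Require Import Defs.
From HB Require Import structures.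
From mathcomp Require Import all_boot all_order all_algebra.
From mathcomp Require Import fingroup perm.
Require Import Defs.
Import Order.TTheory GRing.Theory Num.Theory.
Local Open Scope ring_scope.
Set Implicit Arguments. Unset Strict Implicit.
Lemma valid_count (R : realFieldType) (T : finType) (A : {set T}) (f : T -> R) (alpha : R) :
  0 <= alpha ->
  (#|[set x in A | #|[set y in A | f x <= f y]|%:R / #|A|%:R <= alpha]|%:R <= alpha * #|A|%:R :> R).
Proof.
move=> a0.
set B := [set x in A | _].
have [->|[x0 xB]] := set_0Vmem B; first by rewrite cards0 mulr_ge0.
case: (@arg_minP _ _ T x0 (fun y => y \in B) f xB) => x xB' xmin.
move: xB'; rewrite /B inE => xB'.
have /andP[xA Gx] := xB'.
have A0 : (0 < #|A|)%N by apply/card_gt0P; exists x.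
have A0R : (0 : R) < #|A|%:R by rewrite ltr0n.
apply: (@le_trans _ _ (#|[set y in A | f x <= f y]|%:R)).
  rewrite ler_nat; apply: subset_leq_card; apply/subsetP => y yB.
  have := yB; rewrite inE => /andP[yA _].
  by rewrite inE yA xmin.
by rewrite -ler_pdivrMr.
Qed.

Section Rank.
Variables (R : realFieldType) (m : nat) (y : 'I_m -> R).

Definition ltl (j i : 'I_m) := (y j < y i) || ((y j == y i) && (j < i)%N).

Lemma psi_ltl i j : psi i j (y i) (y j) = (ltl j i || (j == i)) :> nat.
Proof.
rewrite /psi /ltl.
case: (ltgtP (y j) (y i)) => [h|h|h] /=.
- by [].
- case: eqP => // e. by move: h; rewrite e ltxx.
- rewrite add0n.
  case: (ltngtP j i) => [h1|h1|h1] /=.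
  + by [].
  + by case: eqP => // e; move: h1; rewrite e ltnn.
  + by rewrite (val_inj h1) eqxx.
Qed.

Lemma ltl_irr i : ltl i i = false.
Proof. by rewrite /ltl ltxx eqxx ltnn. Qed.

Lemma ltl_trans l j i : ltl l j -> ltl j i -> ltl l i.
Proof.
rewrite /ltl => /orP[h1|/andP[/eqP e1 h1]] /orP[h2|/andP[/eqP e2 h2]].
- by rewrite (lt_trans h1 h2).
- by rewrite -e2 h1.
- by rewrite e1 h2.
- by rewrite e1 e2 eqxx (ltn_trans h1 h2) orbT.
Qed.

Lemma ltl_asym j i : ltl j i -> ltl i j = false.
Proof.
move=> h; apply/negP => h'; have := ltl_trans h h'; by rewrite ltl_irr.
Qed.

Lemma ltl_total i j : i != j -> ltl i j || ltl j i.
Proof.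
move=> ne; rewrite /ltl.
case: (ltgtP (y i) (y j)) => [h|h|h] //=.
case: (ltngtP i j) => [h1|h1|h1] //=.
by move: ne; rewrite (val_inj h1) eqxx.
Qed.

Lemma psi_le1 i j : (psi i j (y i) (y j) <= 1)%N.
Proof. by rewrite psi_ltl; case: (_ || _). Qed.

Lemma rank_lt_ltl j i : ltl j i -> (rank_ y j < rank_ y i)%N.
Proof.
move=> h; rewrite /rank_ (bigD1 i) //= [X in (_ < X)%N](bigD1 i) //=.
rewrite !psi_ltl ltl_irr eqxx (ltl_asym h) /=.
rewrite (negbTE (_ : i != j)) /=; last first.
  by apply/eqP => e; move: h; rewrite e ltl_irr.
rewrite add0n add1n ltnS; apply: leq_sum => l _.
rewrite !psi_ltl.
case/orP: (orbN (ltl l j || (l == j))) => [h1|h1]; last first.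
  by rewrite (negbTE h1).
rewrite h1.
have: ltl l i by case/orP: h1 => [h2|/eqP ->]; [exact: ltl_trans h2 h|exact h].
by move=> ->.
Qed.

Lemma rank_ge1 i : (1 <= rank_ y i)%N.
Proof.
rewrite /rank_ (bigD1 i) //= psi_ltl eqxx orbT; exact: leq_addr.
Qed.

Lemma rank_le_m i : (rank_ y i <= m)%N.
Proof.
rewrite /rank_ -[X in (_ <= X)%N]card_ord -sum1_card.
by apply: leq_sum => j _; apply: psi_le1.
Qed.

Lemma rank_lt i : ((rank_ y i).-1 < m)%N.
Proof. have := rank_le_m i; have := rank_ge1 i. case: (rank_ y i) => //. Qed.

Definition rho0 i : 'I_m := Ordinal (rank_lt i).

Lemma psi_rank i j : psi i j (y i) (y j) = (rank_ y j <= rank_ y i)%N :> nat.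
Proof.
have [->|ne] := eqVneq j i; first by rewrite psi_ltl eqxx orbT leqnn.
rewrite psi_ltl (negbTE ne) orbF.
case/orP: (ltl_total ne) => h.
  by rewrite h (ltnW (rank_lt_ltl h)).
by rewrite (ltl_asym h) leqNgt (rank_lt_ltl h).
Qed.

Lemma rho0_inj : injective rho0.
Proof.
move=> i j /(congr1 val) /= e.
apply/eqP; apply: contraT => ne.
have e' : rank_ y i = rank_ y j.
  by rewrite -(prednK (rank_ge1 i)) -(prednK (rank_ge1 j)) e.
case/orP: (ltl_total ne) => h; have := rank_lt_ltl h; by rewrite e' ltnn.
Qed.

Lemma rank_perm : exists rho : {perm 'I_m},
  forall i j, psi i j (y i) (y j) = (rho j <= rho i)%N :> nat.
Proof.
exists (perm rho0_inj) => i j; rewrite !permE psi_rank /=.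
move: (rank_ge1 i) (rank_ge1 j); case: (rank_ y i) => // a; case: (rank_ y j) => // b.
Qed.

End Rank.

Definition idy (R : realFieldType) (m : nat) (i : 'I_m) : R := (i : nat)%:R.

Lemma psi_idy (R : realFieldType) m (i j : 'I_m) :
  psi i j (idy R i) (idy R j) = (j <= i)%N :> nat.
Proof.
rewrite /psi /idy ltr_nat eqr_nat.
case: (ltngtP j i) => h //=; rewrite ?h ?eqxx ?leqnn //.
Qed.

Lemma tR_perm (R : realFieldType) kind (phi : nat -> R) m (rho : {perm 'I_m})
  (a : 'I_m -> bool) (y y' : 'I_m -> R) :
  (forall i j, psi i j (y i) (y j) = psi (rho i) (rho j) (y' (rho i)) (y' (rho j))) ->
  tR kind phi a y = tR kind phi (fun r => a ((rho^-1)%g r)) y'.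
Proof.
move=> H; rewrite /tR [RHS](reindex_inj (@perm_inj _ rho)) /=.
apply: eq_bigr => i _; rewrite permK; congr (_ * phi _).
case: kind.
  by rewrite /rank_ [RHS](reindex_inj (@perm_inj _ rho)); apply: eq_bigr => j _; rewrite H.
by rewrite [RHS](reindex_inj (@perm_inj _ rho)); apply: eq_bigr => j _; rewrite H permK.
Qed.


Section Split.
Variables (n : nat) (S : {set 'I_n}).

Definition subf (T : {set 'I_n}) (z : {ffun 'I_n -> bool}) : {ffun 'I_#|T| -> bool} :=
  [ffun r => z (enum_val r)].

Lemma card_subf (T : {set 'I_n}) (z : {ffun 'I_n -> bool}) :
  #|[set i in T | z i]| = #|[set r | subf T z r]|.
Proof.
have -> : [set i in T | z i] = enum_val @: [set r | subf T z r].
  apply/setP => i; rewrite inE; apply/andP/imsetP.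
    move=> [iT zi]; exists (enum_rank_in iT i); last by rewrite enum_rankK_in.
    by rewrite inE ffunE enum_rankK_in.
  by move=> [r]; rewrite inE ffunE => zr ->; rewrite enum_valP.
by rewrite card_imset //; apply: enum_val_inj.
Qed.

Lemma card_split (z : {ffun 'I_n -> bool}) :
  #|[set i | z i]| = (#|[set r | subf S z r]| + #|[set r | subf (~: S) z r]|)%N.
Proof.
rewrite -!card_subf -(cardsID S [set i | z i]); congr (_ + _)%N; apply: eq_card => i;
  by rewrite !inE andbC.
Qed.

Lemma split_inj (z z' : {ffun 'I_n -> bool}) :
  subf S z = subf S z' -> subf (~: S) z = subf (~: S) z' -> z = z'.
Proof.
move=> e1 e2; apply/ffunP => i.
have [iS|iS] := boolP (i \in S).
  move/ffunP: e1 => /(_ (enum_rank_in iS i)); by rewrite !ffunE enum_rankK_in.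
have iS' : i \in ~: S by rewrite inE.
move/ffunP: e2 => /(_ (enum_rank_in iS' i)); by rewrite !ffunE enum_rankK_in.
Qed.

Definition sp (z : {ffun 'I_n -> bool}) := (subf S z, subf (~: S) z).

Lemma sp_inj : injective sp.
Proof. by move=> z z' [e1 e2]; apply: split_inj. Qed.

Lemma sp_onto a u : exists z, subf S z = a /\ subf (~: S) z = u.
Proof.
have H : (#|{: {ffun 'I_#|S| -> bool} * {ffun 'I_#|~: S| -> bool}}| <= #|{ffun 'I_n -> bool}|)%N.
  by rewrite card_prod !card_ffun !card_bool !card_ord -expnD cardsC card_ord.
have := inj_card_onto sp_inj H (a, u).
by case/codomP => z [-> ->]; exists z.
Qed.

Definition cfib (k : nat) (n1 : nat) :=
  #|[set u : {ffun 'I_#|~: S| -> bool} | (k + #|[set r | u r]|)%N == n1]|.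

Lemma fiber_card n1 (a : {ffun 'I_#|S| -> bool}) :
  #|[set z in assign n n1 | subf S z == a]| = cfib #|[set r | a r]| n1.
Proof.
rewrite /cfib.
have -> : [set u : {ffun 'I_#|~: S| -> bool} | (#|[set r | a r]| + #|[set r | u r]|)%N == n1]
   = subf (~: S) @: [set z in assign n n1 | subf S z == a].
  apply/setP => u; rewrite inE; apply/idP/imsetP.
    move=> hu; have [z [e1 e2]] := sp_onto a u.
    exists z => //; rewrite !inE card_split e1 e2 hu eqxx //.
  move=> [z]; rewrite !inE => /andP[zn /eqP za] ->.
  by rewrite -za -card_split.
rewrite card_in_imset //.
move=> z z'; rewrite !inE => /andP[_ /eqP e1] /andP[_ /eqP e2] e.
by apply: split_inj => //; rewrite e1 e2.
Qed.

Lemma card_le_m (a : {ffun 'I_#|S| -> bool}) : (#|[set r | a r]| < #|S|.+1)%N.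
Proof. by rewrite ltnS; have := max_card [set r | a r]; rewrite card_ord. Qed.

Lemma strata (h : pred {ffun 'I_#|S| -> bool}) n1 :
  #|[set z in assign n n1 | h (subf S z)]| =
  (\sum_(k < #|S|.+1) cfib k n1 * #|[set a in assign #|S| k | h a]|)%N.
Proof.
rewrite -sum1dep_card (partition_big (subf S) predT) //=.
have -> : (\sum_(a | predT a) \sum_(z | (z \in assign n n1) && h (subf S z) && (subf S z == a)) 1
   = \sum_(a | h a) cfib #|[set r | a r]| n1)%N.
  rewrite [RHS]big_mkcond /=; apply: eq_bigr => a _.
  case: (boolP (h a)) => ha.
    rewrite -fiber_card -sum1dep_card; apply: eq_bigl => z.
    by case: eqP => [->|]; rewrite ?ha ?andbT ?andbF.
  rewrite big_pred0 // => z; case: eqP => [->|]; by rewrite ?(negbTE ha) ?andbF.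
rewrite (partition_big (fun a => Ordinal (card_le_m a)) predT) //=.
apply: eq_bigr => k _.
rewrite (eq_bigr (fun _ => cfib k n1)); last first.
  by move=> a /andP[_ /eqP <-].
rewrite sum_nat_cond_const mulnC; congr (_ * _)%N; apply: eq_card => a.
by rewrite !inE andbC -val_eqE.
Qed.
End Split.

Lemma assignE m k (a : {ffun 'I_m -> bool}) : (a \in assign m k) = (#|[set i | a i]| == k).
Proof. by rewrite inE. Qed.

Lemma tR_ext (R : realFieldType) kind (phi : nat -> R) m (a a' : 'I_m -> bool) (y y' : 'I_m -> R) :
  a =1 a' -> y =1 y' -> tR kind phi a y = tR kind phi a' y'.
Proof.
move=> ea ey; rewrite /tR; apply: eq_bigr => i _; rewrite ea; congr (_ * phi _).
by case: kind; [rewrite /rank_|]; apply: eq_bigr => j _; rewrite ?ea !ey.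
Qed.

Lemma tR_rep (R : realFieldType) kind (phi : nat -> R) m (y : 'I_m -> R) :
  exists rho : {perm 'I_m}, forall a : 'I_m -> bool,
    tR kind phi a y = tR kind phi (fun r => a ((rho^-1)%g r)) (@idy R m).
Proof.
have [rho H] := rank_perm y; exists rho => a; apply: tR_perm => i j.
by rewrite H psi_idy.
Qed.

Lemma card_comp m (rho : {perm 'I_m}) (b : 'I_m -> bool) :
  #|[set i | b (rho i)]| = #|[set i | b i]|.
Proof.
have -> : [set i | b (rho i)] = rho @^-1: [set i | b i] by apply/setP => i; rewrite !inE.
exact: card_preimset (@perm_inj _ rho).
Qed.

Lemma count_perm m k (rho : {perm 'I_m}) (P : pred {ffun 'I_m -> bool}) :
  #|[set a in assign m k | P [ffun r => a ((rho^-1)%g r)]]| = #|[set b in assign m k | P b]|.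
Proof.
pose f := fun a : {ffun 'I_m -> bool} => [ffun r => a ((rho^-1)%g r)].
have finj : injective f.
  move=> a a' /ffunP e; apply/ffunP => i; have := e (rho i); by rewrite !ffunE permK.
rewrite -(card_imset _ finj); apply: eq_card => b; apply/imsetP/idP.
  move=> [a]; rewrite !inE => /andP[ha pa] ->; rewrite pa andbT.
  move: ha.
  have -> : [set i | f a i] = [set i | a ((rho^-1)%g i)] by apply/setP => i; rewrite !inE ffunE.
  by rewrite (card_comp (rho^-1)%g a).
rewrite inE => /andP[hb pb]; exists [ffun i => b (rho i)].
  rewrite !inE.
  have -> : [set i | [ffun i => b (rho i)] i] = [set i | b (rho i)] by apply/setP => i; rewrite !inE ffunE.
  rewrite (card_comp rho b) -assignE hb /=.
  have -> : [ffun r => [ffun i => b (rho i)] ((rho^-1)%g r)] = b by apply/ffunP => i; rewrite !ffunE permKV.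
  exact pb.
by apply/ffunP => i; rewrite !ffunE permKV.
Qed.

Lemma count_inv (R : realFieldType) kind (phi : nat -> R) m k (y y' : 'I_m -> R) c :
  #|[set a in assign m k | c <= tR kind phi a y]| = #|[set a in assign m k | c <= tR kind phi a y']|.
Proof.
have [r1 H1] := tR_rep kind phi y; have [r2 H2] := tR_rep kind phi y'.
transitivity #|[set b in assign m k | c <= tR kind phi b (@idy R m)]|.
  rewrite -(count_perm k r1 (fun b => c <= tR kind phi b (@idy R m))); apply: eq_card => a.
  by rewrite !inE H1; congr (_ && (_ <= _)); apply: tR_ext => // r; rewrite ffunE.
rewrite -(count_perm k r2 (fun b => c <= tR kind phi b (@idy R m))); apply: eq_card => a.
by rewrite !inE H2; congr (_ && (_ <= _)); apply: tR_ext => // r; rewrite ffunE.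
Qed.

Lemma stratum (R : realFieldType) kind (phi : nat -> R) m k (W w0 : 'I_m -> R) (alpha : R) :
  0 <= alpha ->
  #|[set a in assign m k | #|[set b in assign m k | tR kind phi a W <= tR kind phi b w0]|%:R
        / #|assign m k|%:R <= alpha]|%:R <= alpha * #|assign m k|%:R.
Proof.
move=> a0.
have -> : [set a in assign m k | #|[set b in assign m k | tR kind phi a W <= tR kind phi b w0]|%:R
        / #|assign m k|%:R <= alpha] =
   [set a in assign m k | #|[set b in assign m k | tR kind phi a W <= tR kind phi b W]|%:R
        / #|assign m k|%:R <= alpha].
  by apply/setP => a; rewrite !inE (@count_inv _ kind phi _ k w0 W).
exact: (@valid_count _ _ (assign m k) (fun a : {ffun 'I_m -> bool} => tR kind phi a W) alpha a0).
Qed.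

Lemma mainL (R : realFieldType) n (S : {set 'I_n}) n1 (h : pred {ffun 'I_#|S| -> bool}) (alpha : R) :
  (forall k, #|[set a in assign #|S| k | h a]|%:R <= alpha * #|assign #|S| k|%:R) ->
  #|[set z in assign n n1 | h (subf S z)]|%:R <= alpha * #|assign n n1|%:R.
Proof.
move=> H; rewrite strata.
have -> : assign n n1 = [set z in assign n n1 | predT (subf S z)] by apply/setP => z; rewrite inE andbT.
rewrite strata natr_sum [X in _ <= alpha * X]natr_sum mulr_sumr; apply: ler_sum => k _.
rewrite !natrM mulrCA; apply: ler_wpM2l; first exact: ler0n.
have -> : [set a in assign #|S| k | predT a] = assign #|S| k by apply/setP => z; rewrite inE andbT.
exact: H.
Qed.

Theorem theorem8 (R : realFieldType) (kind : rank_kind) (phi : nat -> R)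
  (n n1 : nat) (Y0 Y1 : 'I_n -> R) (M0 M1 : 'I_n -> bool) (delta y0 : 'I_n -> R) :
  (0 < n1)%N -> (n1 < n)%N ->
  {homo phi : a b / (a <= b)%N >-> a <= b} ->
  (forall i, M1 i = M0 i) ->
  (forall i, Y1 i - Y0 i = delta i) ->
  forall alpha : R, 0 < alpha -> alpha < 1 ->
    unifP R n n1 (fun z : {ffun 'I_n -> bool} =>
                    pval kind phi Y0 Y1 M0 M1 delta y0 z <= alpha) <= alpha.
Proof.
move=> _ _ _ HM HY alpha a0 _.
set S0 := [set i | M0 i].
set W := subv S0 Y0.
have E : forall z : {ffun 'I_n -> bool}, pval kind phi Y0 Y1 M0 M1 delta y0 z =
    Defs.G kind phi S0 #|[set r | subf S0 z r]| y0 (tR kind phi (subf S0 z) W).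
  move=> z; rewrite /pval /=.
  have -> : [set i | if z i then M1 i else M0 i] = S0.
    by apply/setP => i; rewrite !inE HM; case: (z i).
  rewrite /tS card_subf; congr (Defs.G _ _ _ _ _ _).
  apply: tR_ext => r; rewrite /subv /W ?ffunE //.
  by case: (z _); rewrite ?mulr1 ?mulr0 ?subr0 // -HY opprB addrC subrK.
pose h := fun a : {ffun 'I_#|S0| -> bool} =>
  Defs.G kind phi S0 #|[set r | a r]| y0 (tR kind phi a W) <= alpha.
rewrite /unifP.
have -> : [set z in assign n n1 | pval kind phi Y0 Y1 M0 M1 delta y0 z <= alpha]
    = [set z in assign n n1 | h (subf S0 z)].
  by apply/setP => z; rewrite !inE E.
have [->|P0] := posnP #|assign n n1|; first by rewrite invr0 mulr0 ltW.
rewrite ler_pdivrMr ?ltr0n //.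
apply: mainL => k.
have -> : [set a in assign #|S0| k | h a] =
  [set a in assign #|S0| k | #|[set b in assign #|S0| k | tR kind phi a W <= tR kind phi b (subv S0 y0)]|%:R
        / #|assign #|S0| k|%:R <= alpha].
  apply/setP => a; rewrite !inE /h /G /unifP; by case: eqP => // ->.
exact: stratum (ltW a0).
Qed.
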